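(* Let $B$ and $Q$ be algebras in the same signature $\tau$, suppose $B$ is abelian and has a Mal'cev term $m$ (a $\tau$-term with $B\models m(x,y,y)=x$ and $m(y,y,x)=x$), fix $0\in B$, and let $x+y:=m^B(x,0,y)$. Let $T_f:Q^{\operatorname{ar}f}\to B$ ($f\in\tau$) be arbitrary maps, and let $q:B\otimes^{T}Q\to Q$ be the projection $(b,x)\mapsto x$. Then $[1,\ker q]=0$ in $B\otimes^{T}Q$.
   Context: All algebras are in the sense of universal algebra. For congruences $\alpha,\beta$ of an algebra, $[\alpha,\beta]$ is the term-condition (TC) commutator; $0$ is the equality relation and $1$ the total relation. An algebra is abelian if $[1,1]=0$. Given algebras $B,Q$ in the same signature $\tau$, a binary operation $+$ on $B$, and maps $T_f:Q^{\operatorname{ar}f}\to B$ ($f\in\tau$), the algebra $B\otimes^{T}Q$ has universe $B\times Q$ and operations $F_f((b_1,q_1),\dots,(b_n,q_n))=\big(f^B(b_1,\dots,b_n)+T_f(q_1,\dots,q_n),\,f^Q(q_1,\dots,q_n)\big)$. *)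

(* Defs.v *)
From mathcomp Require Import all_boot.
Set Implicit Arguments. Unset Strict Implicit. Unset Printing Implicit Defensive.

Definition interp (Fs : Type) (ar : Fs -> nat) (A : Type) :=
  forall f : Fs, ('I_(ar f) -> A) -> A.

Inductive term (Fs : Type) (ar : Fs -> nat) (V : Type) : Type :=
| Var : V -> term ar V
| App : forall f : Fs, ('I_(ar f) -> term ar V) -> term ar V.

Fixpoint eval (Fs : Type) (ar : Fs -> nat) (A : Type) (op : interp ar A)
  (V : Type) (v : V -> A) (t : term ar V) : A :=
  match t with
  | Var x => v x
  | App f args => op f (fun i => eval op v (args i))
  end.

Definition rel (A : Type) := A -> A -> Prop.

Definition total_rel (A : Type) : rel A := fun _ _ => True.
Definition eq_rel (A : Type) : rel A := fun x y => x = y.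

Definition congruence (Fs : Type) (ar : Fs -> nat) (A : Type) (op : interp ar A)
  (R : rel A) : Prop :=
  [/\ (forall x, R x x), (forall x y, R x y -> R y x),
      (forall x y z, R x y -> R y z -> R x z) &
      (forall f (a b : 'I_(ar f) -> A), (forall i, R (a i) (b i)) -> R (op f a) (op f b))].

Definition tc_centralizes (Fs : Type) (ar : Fs -> nat) (A : Type) (op : interp ar A)
  (alpha beta delta : rel A) : Prop :=
  forall (m n : nat) (t : term ar ('I_m + 'I_n)%type) (a b : 'I_m -> A) (c d : 'I_n -> A),
    (forall i, alpha (a i) (b i)) -> (forall j, beta (c j) (d j)) ->
    delta (eval op (fun v => match v with inl i => a i | inr j => c j end) t)
          (eval op (fun v => match v with inl i => a i | inr j => d j end) t) ->
    delta (eval op (fun v => match v with inl i => b i | inr j => c j end) t)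
          (eval op (fun v => match v with inl i => b i | inr j => d j end) t).

Definition tc_commutator (Fs : Type) (ar : Fs -> nat) (A : Type) (op : interp ar A)
  (alpha beta : rel A) : rel A :=
  fun x y => forall delta : rel A, congruence op delta ->
    tc_centralizes op alpha beta delta -> delta x y.

Definition abelian_alg (Fs : Type) (ar : Fs -> nat) (A : Type) (op : interp ar A) : Prop :=
  forall x y, tc_commutator op (@total_rel A) (@total_rel A) x y -> x = y.

Definition val3 (A : Type) (x y z : A) : 'I_3 -> A :=
  fun i => match val i with 0 => x | 1 => y | _ => z end.

Definition malcev (Fs : Type) (ar : Fs -> nat) (B : Type) (op : interp ar B)
  (m : term ar 'I_3) : Prop :=
  forall x y, eval op (val3 x y y) m = x /\ eval op (val3 y y x) m = x.

Definition mplus (Fs : Type) (ar : Fs -> nat) (B : Type) (op : interp ar B)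
  (m : term ar 'I_3) (zero : B) (x y : B) : B :=
  eval op (val3 x zero y) m.

Definition otimes_op (Fs : Type) (ar : Fs -> nat) (B Q : Type)
  (opB : interp ar B) (opQ : interp ar Q) (plus : B -> B -> B)
  (T : forall f : Fs, ('I_(ar f) -> Q) -> B) : interp ar (B * Q)%type :=
  fun f args =>
    (plus (opB f (fun i => (args i).1)) (T f (fun i => (args i).2)),
     opQ f (fun i => (args i).2)).

Definition ker_rel (A C : Type) (h : A -> C) : rel A := fun x y => h x = h y.

(* Main.v *)
Require Import Defs.
From mathcomp Require Import all_boot.
From Stdlib Require Import FunctionalExtensionality.
Set Implicit Arguments. Unset Strict Implicit. Unset Printing Implicit Defensive.

Fixpoint rename (Fs : Type) (ar : Fs -> nat) (X Y : Type) (h : X -> Y)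
  (t : term ar X) : term ar Y :=
  match t with
  | Var x => Var ar (h x)
  | App f args => App (fun i => rename h (args i))
  end.

Fixpoint subst (Fs : Type) (ar : Fs -> nat) (X Y : Type) (s : X -> term ar Y)
  (t : term ar X) : term ar Y :=
  match t with
  | Var x => s x
  | App f args => App (fun i => subst s (args i))
  end.

Lemma eval_rename (Fs : Type) (ar : Fs -> nat) (A : Type) (op : interp ar A)
  (X Y : Type) (h : X -> Y) (v : Y -> A) (t : term ar X) :
  eval op v (rename h t) = eval op (fun x => v (h x)) t.
Proof.
elim: t => [x|f args IH] //=; congr (op f _); apply: functional_extensionality => i; exact: IH.
Qed.

Lemma eval_subst (Fs : Type) (ar : Fs -> nat) (A : Type) (op : interp ar A)
  (X Y : Type) (s : X -> term ar Y) (v : Y -> A) (t : term ar X) :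
  eval op v (subst s t) = eval op (fun x => eval op v (s x)) t.
Proof.
elim: t => [x|f args IH] //=; congr (op f _); apply: functional_extensionality => i; exact: IH.
Qed.

Lemma rename_comp (Fs : Type) (ar : Fs -> nat) (X Y Z : Type) (h : X -> Y) (g : Y -> Z)
  (t : term ar X) : rename g (rename h t) = rename (fun x => g (h x)) t.
Proof.
elim: t => [x|f args IH] //=; congr App; apply: functional_extensionality => i; exact: IH.
Qed.

Definition sumf (X1 X2 Y1 Y2 : Type) (g1 : X1 -> Y1) (g2 : X2 -> Y2)
  (x : X1 + X2) : Y1 + Y2 :=
  match x with inl i => inl (g1 i) | inr j => inr (g2 j) end.

Lemma ord0_False (i : 'I_0) : False.
Proof. by case: i. Qed.

Definition ord0_fun (Y : Type) (i : 'I_0) : Y := False_rect Y (ord0_False i).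

Definition finitizable (Fs : Type) (ar : Fs -> nat) (V W : Type) (t : term ar (V + W)%type) :=
  exists m n (t' : term ar ('I_m + 'I_n)%type) (g1 : 'I_m -> V) (g2 : 'I_n -> W),
    t = rename (sumf g1 g2) t'.

Lemma combine (Fs : Type) (ar : Fs -> nat) (V W : Type) (N : nat)
  (F : 'I_N -> term ar (V + W)%type) :
  (forall i, finitizable (F i)) ->
  exists m n (ts : 'I_N -> term ar ('I_m + 'I_n)%type) (g1 : 'I_m -> V) (g2 : 'I_n -> W),
    forall i, F i = rename (sumf g1 g2) (ts i).
Proof.
elim: N F => [|N IH] F HF.
  exists 0, 0, (@ord0_fun _), (@ord0_fun _), (@ord0_fun _) => i; case: (ord0_False i).
have [m0 [n0 [t0 [g10 [g20 E0]]]]] := HF ord0.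
have [m' [n' [ts' [g1' [g2' E']]]]] := IH (fun i => F (lift ord0 i)) (fun i => HF _).
pose g1 (k : 'I_(m0 + m')) := match split k with inl i => g10 i | inr i => g1' i end.
pose g2 (k : 'I_(n0 + n')) := match split k with inl i => g20 i | inr i => g2' i end.
exists (m0 + m'), (n0 + n').
exists (fun i => match unlift ord0 i with
                 | None => rename (sumf (@lshift m0 m') (@lshift n0 n')) t0
                 | Some j => rename (sumf (@rshift m0 m') (@rshift n0 n')) (ts' j) end).
exists g1, g2 => i.
case: unliftP => [j ->|->]; rewrite rename_comp.
  rewrite E'; congr rename; apply: functional_extensionality => -[x|x] /=;
  by rewrite /g1 /g2 /= -[rshift _ _]/(unsplit (inr _)) unsplitK.
rewrite E0; congr rename; apply: functional_extensionality => -[x|x] /=;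
by rewrite /g1 /g2 /= -[lshift _ _]/(unsplit (inl _)) unsplitK.
Qed.

Lemma finitize (Fs : Type) (ar : Fs -> nat) (V W : Type) (t : term ar (V + W)%type) :
  finitizable t.
Proof.
elim: t => [[x|x]|f args IH].
- exists 1, 0, (Var ar (inl ord0)), (fun _ => x), (@ord0_fun _) => //.
- exists 0, 1, (Var ar (inr ord0)), (@ord0_fun _), (fun _ => x) => //.
- have [m [n [ts [g1 [g2 E]]]]] := combine IH.
  exists m, n, (App ts), g1, g2 => /=; congr App; apply: functional_extensionality => i; exact: E.
Qed.

Definition sel (V W A : Type) (a : V -> A) (c : W -> A) (x : V + W) : A :=
  match x with inl i => a i | inr j => c j end.

Lemma abelian_tc (Fs : Type) (ar : Fs -> nat) (B : Type) (opB : interp ar B) :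
  abelian_alg opB ->
  forall (X V W : Type) (h : X -> V + W) (t : term ar X) (a b : V -> B) (c d : W -> B),
    eval opB (fun x => sel a c (h x)) t = eval opB (fun x => sel a d (h x)) t ->
    eval opB (fun x => sel b c (h x)) t = eval opB (fun x => sel b d (h x)) t.
Proof.
move=> Hab X V W h t a b c d.
rewrite -!(eval_rename opB h (sel _ _)).
have [m [n [t' [g1 [g2 ->]]]]] := finitize (rename h t).
rewrite !eval_rename => H.
have E : forall (a : V -> B) (c : W -> B),
  (fun x => sel a c (sumf g1 g2 x)) =
  (fun v => match v with inl i => a (g1 i) | inr j => c (g2 j) end).
  by move=> a0 c0; apply: functional_extensionality => -[x|x].
rewrite !E in H *.
apply: Hab => delta [Hr _ _ _] Hc.
apply: (Hc m n t' (fun i => a (g1 i))) => //; rewrite H; exact: Hr.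
Qed.

Definition kap (Fs : Type) (ar : Fs -> nat) (B Q V : Type) (opQ : interp ar Q) (zero : B)
  (T : forall f : Fs, ('I_(ar f) -> Q) -> B) (q : V -> Q) (o : option (term ar V)) : B :=
  match o with
  | Some (App f args) => T f (fun i => eval opQ q (args i))
  | _ => zero
  end.

Fixpoint tr (Fs : Type) (ar : Fs -> nat) (V : Type) (m : term ar 'I_3) (t : term ar V)
  : term ar (V + option (term ar V))%type :=
  match t with
  | Var x => Var ar (inl x)
  | App f args => subst (val3 (App (fun i => tr m (args i))) (Var ar (inr None))
                                  (Var ar (inr (Some (App args))))) m
  end.

Lemma eval_tr (Fs : Type) (ar : Fs -> nat) (B Q : Type)
  (opB : interp ar B) (opQ : interp ar Q) (m : term ar 'I_3) (zero : B)
  (T : forall f : Fs, ('I_(ar f) -> Q) -> B) (V : Type) (p : V -> B * Q) (t : term ar V) :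
  eval (otimes_op opB opQ (mplus opB m zero) T) p t =
  (eval opB (sel (fun x => (p x).1) (kap opQ zero T (fun x => (p x).2))) (tr m t),
   eval opQ (fun x => (p x).2) t).
Proof.
elim: t => [x|f args IH] /=; first by case: (p x).
rewrite /otimes_op /mplus eval_subst.
have E1 : (fun i => (eval (otimes_op opB opQ (mplus opB m zero) T) p (args i)).1) =
          (fun i => eval opB (sel (fun x => (p x).1) (kap opQ zero T (fun x => (p x).2))) (tr m (args i))).
  by apply: functional_extensionality => i; rewrite IH.
have E2 : (fun i => (eval (otimes_op opB opQ (mplus opB m zero) T) p (args i)).2) =
          (fun i => eval opQ (fun x => (p x).2) (args i)).
  by apply: functional_extensionality => i; rewrite IH.
rewrite E1 E2; congr pair; congr eval.
apply: functional_extensionality => i; rewrite /val3; by case: (val i) => [|[|k]].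
Qed.

Theorem lemma2p7 (Fs : Type) (ar : Fs -> nat) (B Q : Type)
  (opB : interp ar B) (opQ : interp ar Q) (m : term ar 'I_3) (zero : B)
  (T : forall f : Fs, ('I_(ar f) -> Q) -> B) :
  abelian_alg opB -> malcev opB m ->
  forall u v : B * Q,
    tc_commutator (otimes_op opB opQ (mplus opB m zero) T)
      (@total_rel (B * Q)) (ker_rel (fun p : B * Q => p.2)) u v ->
    u = v.
Proof.
move=> Hab _ u v Hc; apply: (Hc (@eq_rel _)).
  split=> [x|x y|x y z|f a b]; rewrite /eq_rel //; try congruence.
  by move=> H; congr (_ f _); apply: functional_extensionality.
move=> mm n t a b c d _ Hcd; rewrite /eq_rel !eval_tr.
have Ed : forall a0 : 'I_mm -> B * Q,
  (fun x => (match x with inl i => a0 i | inr j => d j end).2) =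
  (fun x => (match x with inl i => a0 i | inr j => c j end).2).
  by move=> a0; apply: functional_extensionality => -[i|j] //=; symmetry; apply: (Hcd j).
rewrite (Ed a) (Ed b) => /(congr1 fst) /= H1; congr pair.
pose h (x : ('I_mm + 'I_n) + option (term ar ('I_mm + 'I_n))) :
  ('I_mm + option (term ar ('I_mm + 'I_n))) + 'I_n :=
  match x with inl (inl i) => inl (inl i) | inl (inr j) => inr j | inr o => inl (inr o) end.
have Ev : forall (a0 c0 : _ -> B * Q),
  sel (fun x => (match x with inl i => a0 i | inr j => c0 j end).1)
      (kap opQ zero T (fun x => (match x with inl i => a0 i | inr j => c j end).2)) =
  (fun x => sel (sel (fun i => (a0 i).1)
                     (kap opQ zero T (fun x => (match x with inl i => a0 i | inr j => c j end).2)))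
                (fun j => (c0 j).1) (h x)).
  by move=> a0 c0; apply: functional_extensionality => -[[i|j]|o].
rewrite (Ev a c) (Ev a d) in H1; rewrite (Ev b c) (Ev b d).
by move: H1; apply: abelian_tc.
Qed.
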